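(* Let $M,N$ be complete pointed metric spaces and $f\colon M\to N$ a Lipschitz map with $f(0_M)=0_N$. If $f(M)$ is totally bounded in $N$ and $f$ is uniformly locally flat, i.e. $\displaystyle\lim_{d(x,y)\to0}\frac{d(f(x),f(y))}{d(x,y)}=0$, then $\widehat f\colon\mathcal F(M)\to\mathcal F(N)$ is compact.
   Context: Scalars are $\mathbb K=\mathbb R$ or $\mathbb C$. For a pointed metric space $(M,d,0_M)$, $\mathrm{Lip}_0(M)$ denotes the Banach space of Lipschitz functions $g\colon M\to\mathbb K$ with $g(0_M)=0$ normed by the best Lipschitz constant; $\delta(x)\in\mathrm{Lip}_0(M)^*$ is evaluation at $x$; the Lipschitz-free space $\mathcal F(M)$ is the norm-closed linear span of $\{\delta(x):x\in M\}$ in $\mathrm{Lip}_0(M)^*$. For a Lipschitz map $f\colon M\to N$ with $f(0_M)=0_N$, $\widehat f\colon\mathcal F(M)\to\mathcal F(N)$ is the unique bounded linear operator with $\widehat f(\delta(x))=\delta(f(x))$ for all $x\in M$. *)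

(* Defs.v *)
From HB Require Import structures.
From mathcomp Require Import all_boot all_order all_algebra.
From mathcomp Require Import reals complex.
Set Implicit Arguments. Unset Strict Implicit. Unset Printing Implicit Defensive.
Import Order.TTheory GRing.Theory Num.Theory.
Local Open Scope ring_scope.

Definition scal (R : realType) (b : bool) : numFieldType :=
  if b then (R[i] : numFieldType) else (R : numFieldType).

Definition embed (R : realType) (b : bool) : R -> scal R b :=
  match b return R -> scal R b with
  | true => fun r : R => ((r%:C)%C : R[i])
  | false => fun r : R => r
  end.

Record metric (R : realType) (M : Type) := Metric {
  dist :> M -> M -> R;
  dist_ge0 : forall x y, 0 <= dist x y;
  dist_eq0 : forall x y, dist x y = 0 <-> x = y;
  dist_sym : forall x y, dist x y = dist y x;
  dist_tri : forall x y z, dist x z <= dist x y + dist y z }.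

Section Defs.
Variable R : realType.

Definition cauchy_seq (M : Type) (d : metric R M) (u : nat -> M) : Prop :=
  forall e : R, 0 < e -> exists N : nat, forall m n, (N <= m)%N -> (N <= n)%N ->
    d (u m) (u n) < e.

Definition converges_to (M : Type) (d : metric R M) (u : nat -> M) (l : M) : Prop :=
  forall e : R, 0 < e -> exists N : nat, forall n, (N <= n)%N -> d (u n) l < e.

Definition complete (M : Type) (d : metric R M) : Prop :=
  forall u : nat -> M, cauchy_seq d u -> exists l, converges_to d u l.

Definition lipschitz (M N : Type) (dM : metric R M) (dN : metric R N)
  (f : M -> N) : Prop :=
  exists L : R, forall x y, dN (f x) (f y) <= L * dM x y.

Definition image_totally_bounded (M N : Type) (dN : metric R N) (f : M -> N) : Prop :=
  forall e : R, 0 < e -> exists (n : nat) (c : 'I_n -> N),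
    forall x : M, exists i : 'I_n, dN (f x) (c i) < e.

Definition uniformly_locally_flat (M N : Type) (dM : metric R M) (dN : metric R N)
  (f : M -> N) : Prop :=
  forall e : R, 0 < e -> exists2 del : R, 0 < del &
    forall x y, 0 < dM x y -> dM x y < del -> dN (f x) (f y) <= e * dM x y.

Variable b : bool.
Notation K := (scal R b).

Definition lip_le (M : Type) (d : metric R M) (g : M -> K) (L : R) : Prop :=
  forall x y, `|g x - g y| <= embed b (L * d x y).

Definition Lip0 (M : Type) (d : metric R M) (z : M) (g : M -> K) : Prop :=
  g z = 0 /\ exists L : R, lip_le d g L.

(** Functionals on Lip_0(M) are represented as maps (M -> K) -> K; only their
    values on Lip_0(M) matter. *)
Definition functional (M : Type) := (M -> K) -> K.

Definition dnorm_le (M : Type) (d : metric R M) (z : M) (phi : functional M)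
  (c : R) : Prop :=
  forall g : M -> K, g z = 0 -> lip_le d g 1 -> `|phi g| <= embed b c.

Definition in_dual (M : Type) (d : metric R M) (z : M) (phi : functional M) : Prop :=
  (forall (a : K) (g h : M -> K), Lip0 d z g -> Lip0 d z h ->
     phi (fun x => a * g x + h x) = a * phi g + phi h)
  /\ exists c : R, dnorm_le d z phi c.

Definition delta (M : Type) (x : M) : functional M := fun g => g x.

Definition molecule (M : Type) (n : nat) (a : 'I_n -> K) (p : 'I_n -> M)
  : functional M := fun g => \sum_(i < n) a i * delta (p i) g.

Definition fsub (M : Type) (phi psi : functional M) : functional M :=
  fun g => phi g - psi g.

(** Lipschitz-free space F(M): norm closure of span{delta(x)} in Lip_0(M)^*. *)
Definition in_free (M : Type) (d : metric R M) (z : M) (phi : functional M) : Prop :=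
  in_dual d z phi /\
  forall e : R, 0 < e -> exists (n : nat) (a : 'I_n -> K) (p : 'I_n -> M),
    dnorm_le d z (fsub phi (molecule a p)) e.

(** hat f : F(M) -> F(N), the restriction to F(M) of the adjoint of the
    composition operator g |-> g o f; it is the bounded linear operator with
    hat f (delta x) = delta (f x). *)
Definition hat (M N : Type) (f : M -> N) (phi : functional M) : functional N :=
  fun g => phi (g \o f).

(** T : F(M) -> F(N) is compact: the image of the closed unit ball of F(M) is
    relatively compact in F(N), stated sequentially (metric space). *)
Definition compact_op (M N : Type) (dM : metric R M) (zM : M)
  (dN : metric R N) (zN : N) (T : functional M -> functional N) : Prop :=
  forall u : nat -> functional M,
    (forall n, in_free dM zM (u n) /\ dnorm_le dM zM (u n) 1) ->
    exists (sigma : nat -> nat) (psi : functional N),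
      (forall n, (sigma n < sigma n.+1)%N) /\ in_free dN zN psi /\
      forall e : R, 0 < e -> exists N0 : nat, forall n, (N0 <= n)%N ->
        dnorm_le dN zN (fsub (T (u (sigma n))) psi) e.

End Defs.

(* Main.v *)
Require Import Defs.
From HB Require Import structures.
From mathcomp Require Import all_boot all_order all_algebra.
From mathcomp Require Import reals complex classical_sets.
From mathcomp Require Import ring lra zify.
From Stdlib Require Import ClassicalEpsilon Classical FunctionalExtensionality.
Set Implicit Arguments. Unset Strict Implicit. Unset Printing Implicit Defensive.
Import Order.TTheory GRing.Theory Num.Theory.
Local Open Scope ring_scope.
Section KB.
Variable R : realType.
Variable b : bool.
Notation K := (scal R b).
Definition knorm (x : K) : R :=
  match b return scal R b -> R with
  | true => fun z : R[i] => complex.Re `|z|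
  | false => fun z : R => `|z|
  end x.
Local Notation nk := knorm.

Lemma normE (x : K) : `|x| = embed b (nk x).
Proof.
rewrite /nk /embed; case: b x => //= x.
Qed.

Lemma embedD (x y : R) : embed b (x + y) = embed b x + embed b y.
Proof. by case: b => //=; rewrite rmorphD. Qed.
Lemma embedM (x y : R) : embed b (x * y) = embed b x * embed b y.
Proof. by case: b => //=; rewrite rmorphM. Qed.
Lemma embedN (x : R) : embed b (- x) = - embed b x.
Proof. by case: b => //=; rewrite rmorphN. Qed.
Lemma embed0 : embed b (0:R) = 0.
Proof. by case: b. Qed.
Lemma embed1 : embed b (1:R) = 1.
Proof. by case: b. Qed.
Lemma embed_le (x y : R) : (embed b x <= embed b y) = (x <= y).
Proof. by case: b => //=; rewrite lecR. Qed.
Lemma embed_inj : injective (@embed R b).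
Proof. by move=> x y e; apply/eqP; rewrite eq_le -!embed_le e lexx. Qed.
Lemma embed_lt (x y : R) : (embed b x < embed b y) = (x < y).
Proof. by rewrite !lt_def embed_le (inj_eq embed_inj). Qed.
Lemma embed_norm (r : R) : `|embed b r| = embed b `|r|.
Proof.
have [r0|r0] := leP 0 r.
  by rewrite !ger0_norm // -embed0 embed_le.
rewrite !ltr0_norm ?embedN // -embed0 embed_lt //.
Qed.
Lemma nk_le (x : K) r : (`|x| <= embed b r) = (nk x <= r).
Proof. by rewrite normE embed_le. Qed.
Lemma nk_ge0 (x : K) : 0 <= nk x.
Proof. by rewrite -embed_le embed0 -normE. Qed.
Lemma nkD (x y : K) : nk (x + y) <= nk x + nk y.
Proof. by rewrite -embed_le embedD -!normE ler_normD. Qed.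
Lemma nkN (x : K) : nk (- x) = nk x.
Proof. by apply: embed_inj; rewrite -!normE normrN. Qed.
Lemma nkM (x y : K) : nk (x * y) = nk x * nk y.
Proof. by apply: embed_inj; rewrite embedM -!normE normrM. Qed.
Lemma nk_embed r : nk (embed b r) = `|r|.
Proof. by apply: embed_inj; rewrite -normE embed_norm. Qed.
Lemma nk0 : nk 0 = 0.
Proof. by rewrite -embed0 nk_embed normr0. Qed.
Lemma nk_eq0 (x : K) : nk x = 0 -> x = 0.
Proof. by move=> h; apply/normr0_eq0; rewrite normE h embed0. Qed.
Lemma nkB (x y : K) : nk (x - y) = nk (y - x).
Proof. by rewrite -nkN opprB. Qed.
Lemma nk_tri (x y z : K) : nk (x - z) <= nk (x - y) + nk (y - z).
Proof. by rewrite (_ : x - z = (x - y) + (y - z)) ?nkD // addrA subrK. Qed.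
End KB.
Lemma R_complete (R : realType) (x : nat -> R) :
  (forall e : R, 0 < e -> exists N, forall n m, (N <= n)%N -> (N <= m)%N -> `|x n - x m| <= e) ->
  exists l, forall e : R, 0 < e -> exists N, forall n, (N <= n)%N -> `|x n - l| <= e.
Proof.
move=> H.
have [N1 h1] := H 1 ltr01.
pose A := (fun y => exists N, forall n, (N <= n)%N -> y <= x n).
have A0 : A (x N1 - 1).
  exists N1 => n hn; have := h1 N1 n (leqnn _) hn.
  rewrite ler_norml => /andP[h h']; lra.
have Aub : ubound A (x N1 + 1).
  move=> y [N hN]; have := hN (maxn N N1) (leq_maxl _ _).
  have := h1 (maxn N N1) N1 (leq_maxr _ _) (leqnn _).
  rewrite ler_norml => /andP[h h2] h'; lra.
have hs : has_sup A by split; [exists (x N1 - 1) | exists (x N1 + 1)].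
exists (sup A) => e e0.
have [Ne he] := H e e0; exists Ne => n hn.
have u1 : sup A <= x n + e.
  apply: ge_sup; first by exists (x N1 - 1).
  move=> y [N hN]; have := hN (maxn N Ne) (leq_maxl _ _).
  have := he n (maxn N Ne) hn (leq_maxr _ _).
  rewrite ler_norml => /andP[h h2] h'; lra.
have u2 : x n - e <= sup A.
  apply: sup_upper_bound => //.
  exists Ne => m hm; have := he n m hn hm.
  rewrite ler_norml => /andP[h h2]; lra.
rewrite ler_norml; apply/andP; split; lra.
Qed.
Section S.
Variable R : realType.
Lemma cnorm_ge (z : R[i]) : `|complex.Re z| <= complex.Re `|z| /\ `|complex.Im z| <= complex.Re `|z|.
Proof.
rewrite normc_def /=; split.
  rewrite -sqrtr_sqr; apply: ler_wsqrtr; rewrite lerDl; exact: sqr_ge0.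
rewrite -sqrtr_sqr; apply: ler_wsqrtr; rewrite lerDr; exact: sqr_ge0.
Qed.
Lemma cnorm_le (z : R[i]) : complex.Re `|z| <= `|complex.Re z| + `|complex.Im z|.
Proof.
rewrite normc_def /=.
set a := complex.Re z; set c := complex.Im z.
have h0 : 0 <= `|a| + `|c| by rewrite addr_ge0.
rewrite -(ger0_norm h0) -sqrtr_sqr; apply: ler_wsqrtr.
rewrite sqrrD -[a ^+ 2]real_normK ?num_real // -[c ^+ 2]real_normK ?num_real //.
have : 0 <= `|a| * `|c| by rewrite mulr_ge0.
move=> h; rewrite -addrA lerD2l lerDr; exact: mulrn_wge0.
Qed.
End S.
Lemma pair_index (j1 j2 k1 k2 : nat) : (j1 < k1)%N -> (j2 < k2)%N ->
  ((j1 * k2 + j2) %/ k2 = j1 /\ (j1 * k2 + j2) %% k2 = j2 /\ (j1 * k2 + j2 < k1 * k2))%N.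
Proof.
move=> h1 h2; have k2p : (0 < k2)%N by case: k2 h2.
split; first by rewrite divnMDl // divn_small // addn0.
split; first by rewrite modnMDl modn_small.
apply: (@leq_trans (j1.+1 * k2)); first by rewrite mulSn; lia.
by rewrite leq_mul2r h1 orbT.
Qed.

Lemma pigeon (c : nat -> nat) (k : nat) : (forall n, (c n < k)%N) ->
  exists j, forall N, exists n, (N <= n)%N /\ c n = j.
Proof.
move=> hc; apply: NNPP => hn.
have hj : forall j, exists N, forall n, (N <= n)%N -> c n <> j.
  move=> j; apply: NNPP => h1; apply: hn; exists j => N.
  apply: NNPP => h2; apply: h1; exists N => n hn' e; apply: h2; by exists n.
have : forall k', exists B, forall j, (j < k')%N -> forall n, (B <= n)%N -> c n <> j.
  elim=> [|k' [B hB]]; first by exists 0%N.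
  have [N hN] := hj k'; exists (maxn B N) => j; rewrite ltnS leq_eqVlt => /orP[/eqP ->|jl] n hn2.
    by apply: hN; apply: leq_trans hn2; apply: leq_maxr.
  by apply: hB => //; apply: leq_trans hn2; apply: leq_maxl.
move=> /(_ k) [B hB]; exact: (hB (c B) (hc B) B (leqnn _)).
Qed.

Lemma sub_pigeon (c : nat -> nat) (k : nat) : (forall n, (c n < k)%N) ->
  exists (tau : nat -> nat) (j : nat), (forall i, (tau i < tau i.+1)%N) /\ forall i, c (tau i) = j.
Proof.
move=> /pigeon [j hj].
pose h N := proj1_sig (constructive_indefinite_description _ (hj N)).
have hh N : (N <= h N)%N /\ c (h N) = j by rewrite /h; case: constructive_indefinite_description.
pose tau := fix t i := match i with 0%N => h 0%N | i'.+1 => h (t i').+1 end.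
exists tau, j; split.
  by move=> i /=; exact: (hh _).1.
by case=> [|i] /=; exact: (hh _).2.
Qed.

Lemma incr_ge (tau : nat -> nat) : (forall i, (tau i < tau i.+1)%N) -> forall i, (i <= tau i)%N.
Proof. by move=> h; elim=> // i ih; apply: leq_ltn_trans ih (h i). Qed.

Lemma incr_lt (tau : nat -> nat) : (forall i, (tau i < tau i.+1)%N) -> forall i j, (i < j)%N -> (tau i < tau j)%N.
Proof.
move=> h i j; elim: j => // j ih; rewrite ltnS leq_eqVlt => /orP[/eqP <-|l]; first exact: h.
exact: ltn_trans (ih l) (h j).
Qed.

Lemma diag (Q : nat -> nat -> nat -> Prop) :
  (forall k (S : nat -> nat), (forall i, (S i < S i.+1)%N) ->
     exists tau : nat -> nat, (forall i, (tau i < tau i.+1)%N) /\ forall i j, Q k (S (tau i)) (S (tau j))) ->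
  exists sigma : nat -> nat, (forall i, (sigma i < sigma i.+1)%N) /\
     forall k n m, (k < n)%N -> (k < m)%N -> Q k (sigma n) (sigma m).
Proof.
move=> H.
pose P (S : nat -> nat) := forall i, (S i < S i.+1)%N.
have step : forall k (S : {S : nat -> nat | P S}), {tau : nat -> nat | P tau /\ forall i j, Q k (proj1_sig S (tau i)) (proj1_sig S (tau j))}.
  move=> k [S hS]; apply: constructive_indefinite_description; exact: H.
have compP : forall (S tau : nat -> nat), P S -> P tau -> P (fun i => S (tau i)).
  move=> S tau hS ht i; exact: incr_lt.
pose nxt k (S : {S : nat -> nat | P S}) : {S : nat -> nat | P S} :=
  exist P (fun i => proj1_sig S (proj1_sig (step k S) i))
    (compP _ _ (proj2_sig S) (proj2_sig (step k S)).1).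
pose phi := fix ph k : {S : nat -> nat | P S} := match k with
  0%N => exist P id (fun i => ltnSn i) | k'.+1 => nxt k' (ph k') end.
have range : forall k d x, exists i, proj1_sig (phi (k + d)%N) x = proj1_sig (phi k) i.
  move=> k d; elim: d => [|d ih] x; first by rewrite addn0; exists x.
  rewrite addnS /=; have [i ->] := ih (proj1_sig (step (k + d)%N (phi (k + d)%N)) x).
  by exists i.
have QP : forall k i j, Q k (proj1_sig (phi k.+1) i) (proj1_sig (phi k.+1) j).
  move=> k i j /=; exact: (proj2_sig (step k (phi k))).2.
exists (fun n => proj1_sig (phi n) n); split.
  move=> i /=; apply: (incr_lt (proj2_sig (phi i))).
  exact: incr_ge (proj1 (proj2_sig (step i (phi i)))) _.
move=> k n m hn hm.
have [i ei] := range k.+1 (n - k.+1)%N n.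
have [j ej] := range k.+1 (m - k.+1)%N m.
rewrite subnKC in ei => //; rewrite subnKC in ej => //.
rewrite ei ej; exact: QP.
Qed.

Section KC.
Variable R : realType.
Variable b : bool.
Notation K := (scal R b).
Notation nk := (@knorm R b).

Lemma K_coords : exists (c1 c2 : K -> R) (mk : R -> R -> K),
  (forall x y, c1 (x - y) = c1 x - c1 y) /\ (forall x y, c2 (x - y) = c2 x - c2 y) /\
  (forall x, `|c1 x| <= nk x) /\ (forall x, `|c2 x| <= nk x) /\
  (forall z r s, nk (z - mk r s) <= `|c1 z - r| + `|c2 z - s|).
Proof.
rewrite /knorm; case: b => /=.
  exists (@complex.Re R), (@complex.Im R), (fun r s => (r +i* s)%C).
  split; first by case=> ? ?; case.
  split; first by case=> ? ?; case.
  split; first by move=> x; exact: (cnorm_ge x).1.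
  split; first by move=> x; exact: (cnorm_ge x).2.
  move=> z r s; apply: le_trans (cnorm_le _) _; by case: z.
exists id, (fun _ => 0), (fun r s => r).
split => //; split; first by move=> *; rewrite subr0.
split => //; split; first by move=> x; rewrite normr0 normr_ge0.
move=> z r s /=; rewrite lerDl; exact: normr_ge0.
Qed.

Lemma K_complete (x : nat -> K) :
  (forall e : R, 0 < e -> exists N, forall n m, (N <= n)%N -> (N <= m)%N -> nk (x n - x m) <= e) ->
  exists l, forall e : R, 0 < e -> exists N, forall n, (N <= n)%N -> nk (x n - l) <= e.
Proof.
move=> H; have [c1 [c2 [mk [hc1 [hc2 [hb1 [hb2 hmk]]]]]]] := K_coords.
have [l1 hl1] : exists l, forall e : R, 0 < e -> exists N, forall n, (N <= n)%N -> `|c1 (x n) - l| <= e.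
  apply: R_complete => e e0; have [N hN] := H e e0; exists N => n m hn hm.
  by rewrite -hc1; apply: le_trans (hb1 _) (hN _ _ hn hm).
have [l2 hl2] : exists l, forall e : R, 0 < e -> exists N, forall n, (N <= n)%N -> `|c2 (x n) - l| <= e.
  apply: R_complete => e e0; have [N hN] := H e e0; exists N => n m hn hm.
  by rewrite -hc2; apply: le_trans (hb2 _) (hN _ _ hn hm).
exists (mk l1 l2) => e e0.
have e2 : 0 < e / 2 by rewrite divr_gt0.
have [N1 h1] := hl1 _ e2; have [N2 h2] := hl2 _ e2.
exists (maxn N1 N2) => n hn; apply: le_trans (hmk _ _ _) _.
have := h1 n (leq_trans (leq_maxl _ _) hn); have := h2 n (leq_trans (leq_maxr _ _) hn).
lra.
Qed.

Lemma R_net (r eta : R) : 0 < eta -> exists k (T : nat -> R),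
  forall a, `|a| <= r -> exists j, (j < k)%N /\ `|a - T j| <= eta.
Proof.
move=> e0; exists (Num.truncn (2 * r / eta)).+1, (fun j => - r + j%:R * eta) => a ha.
have y0 : 0 <= (a + r) / eta.
  move: ha; rewrite ler_norml => /andP[h _].
  apply: divr_ge0; last exact: ltW.
  lra.
exists (Num.truncn ((a + r) / eta)); split.
  rewrite ltnS; apply: Num.Theory.le_truncn; apply: ler_wpM2r.
    by rewrite invr_ge0 ltW.
  by move: ha; rewrite ler_norml => /andP[h h']; lra.
have /andP[t1 t2] := Num.Theory.truncn_itv y0.
set t := (Num.truncn _)%:R in t1 t2 *.
rewrite ler_pdivlMr // in t1; rewrite ltr_pdivrMr // in t2.
rewrite ler_norml; apply/andP; split.
  rewrite mulrSr mulrDl mul1r in t2; lra.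
lra.
Qed.

Lemma K_net (r eta : R) : 0 < eta -> exists k (T : nat -> K),
  forall a, nk a <= r -> exists j, (j < k)%N /\ nk (a - T j) <= eta.
Proof.
move=> e0; have [c1 [c2 [mk [hc1 [hc2 [hb1 [hb2 hmk]]]]]]] := K_coords.
have e2 : 0 < eta / 2 by rewrite divr_gt0.
have [k [Tr hT]] := R_net r e2.
exists (k * k)%N, (fun j => mk (Tr (j %/ k)%N) (Tr (j %% k)%N)) => a ha.
have [j1 [j1k h1]] := hT (c1 a) (le_trans (hb1 a) ha).
have [j2 [j2k h2]] := hT (c2 a) (le_trans (hb2 a) ha).
have [d1 [d2 d3]] := pair_index j1k j2k.
exists (j1 * k + j2)%N; split => //.
rewrite d1 d2; apply: le_trans (hmk _ _ _) _; lra.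
Qed.

Lemma vec_net (m : nat) (r eta : R) : 0 < eta -> exists k (V : nat -> nat -> K),
  forall a : nat -> K, (forall i, (i < m)%N -> nk (a i) <= r) ->
    exists j, (j < k)%N /\ forall i, (i < m)%N -> nk (a i - V j i) <= eta.
Proof.
move=> e0; have [kT [T hT]] := K_net r e0.
elim: m => [|m [k [V hV]]].
  by exists 1%N, (fun _ _ => 0) => a _; exists 0%N.
exists (k * kT)%N, (fun j i => if i == m then T (j %% kT)%N else V (j %/ kT)%N i) => a ha.
have [j1 [j1k h1]] := hV a (fun i hi => ha i (ltnW hi)).
have [j2 [j2k h2]] := hT (a m) (ha m (ltnSn m)).
have [d1 [d2 d3]] := pair_index j1k j2k.
exists (j1 * kT + j2)%N; split => // i; rewrite ltnS leq_eqVlt => /orP[/eqP ->|hi].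
  by rewrite eqxx d2.
by rewrite (ltn_eqF hi) d1; apply: h1.
Qed.
End KC.

Section Fun.
Variable R : realType.
Variable b : bool.
Notation K := (scal R b).
Notation nk := (@knorm R b).
Notation emb := (@embed R b).
Variable X : Type.
Variable d : metric R X.
Variable z : X.
Local Notation LIP0 := (@Lip0 R b X d z).
Local Notation LIPLE := (@lip_le R b X d).
Local Notation DNORM := (@dnorm_le R b X d z).

Definition lin (phi : functional R b X) := forall (a : K) (g h : X -> K),
  LIP0 g -> LIP0 h -> phi (fun x => a * g x + h x) = a * phi g + phi h.

Lemma lipP (g : X -> K) L : LIPLE g L <-> forall x y, nk (g x - g y) <= L * d x y.
Proof. by split=> h x y; have := h x y; rewrite /lip_le nk_le. Qed.

Lemma lip_mono (g : X -> K) L L' : L <= L' -> LIPLE g L -> LIPLE g L'.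
Proof.
move=> hL /lipP h; apply/lipP => x y; apply: le_trans (h x y) _.
by apply: ler_wpM2r => //; exact: dist_ge0.
Qed.

Lemma Lip0_0 : LIP0 (fun _ => 0).
Proof. split => //; exists 0; apply/lipP => x y; by rewrite subr0 nk0 mul0r. Qed.

Lemma Lip0_comb (a : K) (g h : X -> K) : LIP0 g -> LIP0 h ->
  LIP0 (fun x => a * g x + h x).
Proof.
move=> [g0 [Lg hg]] [h0 [Lh hh]]; split; first by rewrite g0 h0 mulr0 addr0.
exists (nk a * Lg + Lh); apply/lipP => x y.
rewrite (_ : _ - _ = a * (g x - g y) + (h x - h y)); last by rewrite mulrBr; ring.
apply: le_trans (nkD _ _) _; rewrite nkM mulrDl -mulrA.
apply: lerD; last by move/lipP: hh; apply.
apply: ler_wpM2l; [exact: nk_ge0 | by move/lipP: hg; apply].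
Qed.

Lemma Lip0_sub (g h : X -> K) : LIP0 g -> LIP0 h -> LIP0 (fun x => g x - h x).
Proof.
move=> hg hh; have := Lip0_comb (-1) hh hg.
have -> : (fun x => -1 * h x + g x) = (fun x => g x - h x) by apply: functional_extensionality => x; rewrite mulN1r addrC.
done.
Qed.

Lemma Lip0_scale (a : K) (g : X -> K) : LIP0 g -> LIP0 (fun x => a * g x).
Proof.
move=> hg; have := Lip0_comb a hg Lip0_0.
by have -> : (fun x => a * g x + 0) = (fun x => a * g x) by apply: functional_extensionality => x; rewrite addr0.
Qed.

Lemma lin0 phi : lin phi -> phi (fun _ => 0) = 0.
Proof.
move=> hl; have := hl 1 _ _ Lip0_0 Lip0_0.
have -> : (fun x : X => 1 * 0 + 0) = (fun _ => 0 : K) by apply: functional_extensionality => x; rewrite mulr0 addr0.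
by rewrite mul1r => /(congr1 (fun t => t - phi (fun _ => 0))); rewrite subrr addrK.
Qed.

Lemma lin_scale phi (a : K) g : lin phi -> LIP0 g -> phi (fun x => a * g x) = a * phi g.
Proof.
move=> hl hg; have := hl a _ _ hg Lip0_0; rewrite lin0 // addr0.
by have -> : (fun x => a * g x + 0) = (fun x => a * g x) by apply: functional_extensionality => x; rewrite addr0.
Qed.

Lemma lin_sub phi g h : lin phi -> LIP0 g -> LIP0 h -> phi (fun x => g x - h x) = phi g - phi h.
Proof.
move=> hl hg hh; have := hl (-1) _ _ hh hg.
have -> : (fun x => -1 * h x + g x) = (fun x => g x - h x) by apply: functional_extensionality => x; rewrite mulN1r addrC.
by move=> ->; rewrite mulN1r addrC.
Qed.

Lemma lin_bound phi c g L : lin phi -> DNORM phi c -> g z = 0 -> LIPLE g L -> 0 < L ->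
  nk (phi g) <= c * L.
Proof.
move=> hl hd g0 hg L0.
pose g' := fun x => emb L^-1 * g x.
have hg' : LIPLE g' 1.
  apply/lipP => x y; rewrite /g' -mulrBr nkM nk_embed ger0_norm; last by rewrite invr_ge0 ltW.
  rewrite mul1r ler_pdivrMl //; by move/lipP: hg; apply.
have g'0 : g' z = 0 by rewrite /g' g0 mulr0.
have := hd g' g'0 hg'; rewrite nk_le /g'.
rewrite lin_scale //; last by split => //; exists L.
rewrite nkM nk_embed ger0_norm; last by rewrite invr_ge0 ltW.
by rewrite ler_pdivrMl // mulrC.
Qed.

Lemma molecule_lin n (a : 'I_n -> K) (p : 'I_n -> X) : lin (molecule a p).
Proof.
move=> al g h _ _; rewrite /molecule /delta.
rewrite mulr_sumr -big_split /=; apply: eq_bigr => i _; rewrite mulrDr; ring.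
Qed.

Lemma fsub_lin phi psi : lin phi -> lin psi -> lin (fsub phi psi).
Proof. move=> h1 h2 a g h hg hh; rewrite /fsub h1 // h2 //; ring. Qed.
End Fun.

Section Lim.
Variable R : realType.
Variable b : bool.
Notation K := (scal R b).
Notation nk := (@knorm R b).

Definition conv (x : nat -> K) (l : K) := forall e : R, 0 < e -> exists N, forall n, (N <= n)%N -> nk (x n - l) <= e.
Definition cauchyK (x : nat -> K) := forall e : R, 0 < e -> exists N, forall n m, (N <= n)%N -> (N <= m)%N -> nk (x n - x m) <= e.
Definition limK (x : nat -> K) : K := epsilon (inhabits 0) (conv x).

Lemma limK_spec x : cauchyK x -> conv x (limK x).
Proof. move=> /K_complete hx; exact: epsilon_spec. Qed.

Lemma conv_le x l y c : conv x l -> (exists N, forall n, (N <= n)%N -> nk (x n - y) <= c) -> nk (l - y) <= c.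
Proof.
move=> hx [N hN]; apply/ler_addgt0Pr => e e0.
have [N' hN'] := hx e e0; set n := maxn N N'.
apply: le_trans (nk_tri _ (x n) _) _.
rewrite nkB addrC; apply: lerD; first exact: hN (leq_maxl _ _).
exact: hN' (leq_maxr _ _).
Qed.

Lemma conv_uniq x l l' : conv x l -> conv x l' -> l = l'.
Proof.
move=> h1 h2; apply: subr0_eq; apply: nk_eq0; apply/eqP; rewrite eq_le nk_ge0 andbT.
apply/ler_addgt0Pl => e e0; rewrite addr0.
have e2 : 0 < e / 2 by rewrite divr_gt0.
have [N1 hN1] := h1 _ e2; have [N2 hN2] := h2 _ e2; set n := maxn N1 N2.
apply: le_trans (nk_tri _ (x n) _) _; rewrite nkB.
have := hN1 n (leq_maxl _ _); have := hN2 n (leq_maxr _ _); lra.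
Qed.

Lemma conv_comb (a : K) x y l l' : conv x l -> conv y l' ->
  conv (fun n => a * x n + y n) (a * l + l').
Proof.
move=> h1 h2 e e0.
have A0 : 0 < nk a + 1 by have := nk_ge0 a; lra.
have e1 : 0 < e / (2 * (nk a + 1)) by rewrite divr_gt0 // mulr_gt0.
have e2 : 0 < e / 2 by rewrite divr_gt0.
have [N1 hN1] := h1 _ e1; have [N2 hN2] := h2 _ e2.
exists (maxn N1 N2) => n hn.
rewrite (_ : _ - _ = a * (x n - l) + (y n - l')); last by ring.
apply: le_trans (nkD _ _) _; rewrite nkM.
have hA : nk a * (e / (2 * (nk a + 1))) <= e / 2.
  apply: le_trans (_ : (nk a + 1) * (e / (2 * (nk a + 1))) <= _).
    by apply: ler_wpM2r; [exact: ltW | lra].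
  rewrite le_eqVlt; apply/orP; left; apply/eqP; field.
  by rewrite gt_eqF.
have h1' := hN1 n (leq_trans (leq_maxl _ _) hn).
have h2' := hN2 n (leq_trans (leq_maxr _ _) hn).
have : nk a * nk (x n - l) <= nk a * (e / (2 * (nk a + 1))) by apply: ler_wpM2l => //; exact: nk_ge0.
lra.
Qed.
End Lim.

Lemma nk_sub4 (R : realType) (b : bool) (a1 a2 a3 a4 : scal R b) :
  knorm ((a1 - a2) - (a3 - a4)) <= knorm (a1 - a3) + knorm (a2 - a4).
Proof.
rewrite (_ : _ - _ = (a1 - a3) + - (a2 - a4)); last by ring.
by apply: le_trans (nkD _ _) _; rewrite nkN.
Qed.

Lemma nk_sub4' (R : realType) (b : bool) (a1 a2 a3 a4 : scal R b) :
  knorm ((a1 - a2) - (a3 - a4)) <= knorm (a1 - a2) + knorm (a3 - a4).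
Proof. by apply: le_trans (nkD _ _) _; rewrite nkN. Qed.

Lemma fin_bound (R : realType) (F : nat -> R) m : exists B, forall i, (i < m)%N -> F i <= B.
Proof.
elim: m => [|m [B hB]]; first by exists 0.
exists (Num.max B (F m)) => i; rewrite ltnS leq_eqVlt => /orP[/eqP ->|hi].
  by rewrite le_max lexx orbT.
by rewrite le_max hB.
Qed.

Section Main.
Variable R : realType.
Variable b : bool.
Notation K := (scal R b).
Notation nk := (@knorm R b).
Variables (M N : Type) (dM : metric R M) (dN : metric R N) (zM : M) (zN : N) (f : M -> N).
Variable Lf : R.
Hypothesis Lf0 : 0 < Lf.
Hypothesis hLf : forall x y, dN (f x) (f y) <= Lf * dM x y.
Hypothesis fz : f zM = zN.
Hypothesis TB : image_totally_bounded dN f.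
Hypothesis ULF : uniformly_locally_flat dM dN f.

Definition inB (g : N -> K) := g zN = 0 /\ @lip_le R b N dN g 1.

Lemma inB0 : inB (fun _ => 0).
Proof. by split => //; apply/lipP => x y; rewrite subr0 nk0 mul1r dist_ge0. Qed.

Lemma comp_lip (g : N -> K) c : @lip_le R b N dN g c -> 0 <= c ->
  @lip_le R b M dM (fun x => g (f x)) (c * Lf).
Proof.
move=> /lipP hg c0; apply/lipP => x y; apply: le_trans (hg _ _) _.
by rewrite -mulrA ler_wpM2l.
Qed.

Lemma netB (e : R) : 0 < e -> exists k (G : nat -> N -> K), (forall j, inB (G j)) /\
  forall g, inB g -> exists j, (j < k)%N /\ @lip_le R b M dM (fun x => g (f x) - G j (f x)) e.
Proof.
move=> e0.
have [del del0 hdel] := ULF (divr_gt0 e0 (ltr0Sn R 1)).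
pose eta := e * del / 8.
have eta0 : 0 < eta by rewrite /eta divr_gt0 // mulr_gt0.
have [n [c hc]] := TB eta0.
case: n c hc => [|n'] c hc; first by have [i _] := hc zM; case: i.
pose cn i := c (inord i).
pose m := n'.+1.
have [R0 hR0] := fin_bound (fun i => dN (cn i) zN) m.
have [kV [V hV]] := vec_net b m R0 eta0.
pose close (g : N -> K) j := forall i, (i < m)%N -> nk (g (cn i) - V j i) <= eta.
pose P j (g : N -> K) := inB g /\ ((exists g', inB g' /\ close g' j) -> close g j).
pose G j := epsilon (inhabits (fun _ : N => 0 : K)) (P j).
have hG : forall j, P j (G j).
  move=> j; apply: epsilon_spec.
  case: (classic (exists g', inB g' /\ close g' j)) => [[g' hg']|hno].
    by exists g'; split; [exact: hg'.1 | move=> _; exact: hg'.2].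
  by exists (fun _ => 0); split; [exact: inB0 | move=> /hno].
exists kV, G; split; first by move=> j; exact: (hG j).1.
move=> g [g0 g1]; have gl := g1; move/lipP: gl => gl.
have [j [jk hj]] : exists j, (j < kV)%N /\ close g j.
  apply: hV => i hi; apply: le_trans (hR0 i hi); rewrite -[g (cn i)]subr0 -g0.
  by rewrite -[dN (cn i) zN]mul1r; apply: gl.
exists j; split => //.
have [[G0 G1] hGc] := hG j.
have cl := hGc (ex_intro _ g (conj (conj g0 g1) hj)).
move/lipP: G1 => Gl.
have close2 : forall i, (i < m)%N -> nk (g (cn i) - G j (cn i)) <= 2 * eta.
  move=> i hi; apply: le_trans (nk_tri _ (V j i) _) _.
  rewrite (nkB (V j i)); have := hj i hi; have := cl i hi; lra.
have sup : forall x, nk (g (f x) - G j (f x)) <= 4 * eta.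
  move=> x; have [o ho] := hc x.
  have co : c o = cn o by rewrite /cn inord_val.
  apply: le_trans (nk_tri _ (g (c o)) _) _.
  apply: le_trans (lerD (lexx _) (nk_tri _ (G j (c o)) _)) _.
  have := gl (f x) (c o); have := Gl (c o) (f x); rewrite dist_sym.
  have := close2 o (ltn_ord o); move: ho; rewrite co; lra.
apply/lipP => x y.
have dge := dist_ge0 dM x y.
have [d0|dpos] := eqVneq (dM x y) 0.
  have exy := proj1 (dist_eq0 dM x y) d0; by rewrite d0 mulr0 exy subrr nk0.
have dp : 0 < dM x y by rewrite lt_def dpos.
case: (ltP (dM x y) del) => hd.
  apply: le_trans (nk_sub4 _ _ _ _) _.
  have := hdel x y dp hd; have := gl (f x) (f y); have := Gl (f x) (f y).
  have : 0 <= e by exact: ltW.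
  move=> e00 h1 h2 h3.
  have -> : e * dM x y = e / 2 * dM x y + e / 2 * dM x y by field.
  by apply: lerD; [rewrite mul1r in h2; exact: le_trans h2 h3 | rewrite mul1r in h1; exact: le_trans h1 h3].
apply: le_trans (nk_sub4' _ _ _ _) _.
have h8 : 8 * eta = e * del by rewrite /eta; field.
have : e * del <= e * dM x y by apply: ler_wpM2l => //; exact: ltW.
have := sup x; have := sup y; lra.
Qed.

Variable u : nat -> functional R b M.
Hypothesis hu : forall n, in_free dM zM (u n) /\ dnorm_le dM zM (u n) 1.

Definition Phi n (g : N -> K) := u n (fun x => g (f x)).

Lemma linu n : @lin R b M dM zM (u n).
Proof. exact: (hu n).1.1.1. Qed.

Lemma Lip0_comp (g : N -> K) : @Lip0 R b N dN zN g -> @Lip0 R b M dM zM (fun x => g (f x)).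
Proof.
move=> [g0 [c hc]]; split; first by rewrite fz.
exists (Num.max c 0 * Lf); apply: comp_lip; last by rewrite le_max lexx orbT.
by apply: lip_mono hc; rewrite le_max lexx.
Qed.

Lemma inB_Lip0 g : inB g -> @Lip0 R b N dN zN g.
Proof. by move=> [g0 g1]; split => //; exists 1. Qed.

Lemma Phi_bound n g : inB g -> nk (Phi n g) <= Lf.
Proof.
move=> [g0 g1]; rewrite -[Lf]mul1r; apply: (lin_bound (linu n) (hu n).2) => //.
  by rewrite fz.
by rewrite -[Lf]mul1r; apply: comp_lip.
Qed.

Lemma Phi_diff n g h e : inB g -> inB h -> 0 < e ->
  @lip_le R b M dM (fun x => g (f x) - h (f x)) e -> nk (Phi n g - Phi n h) <= e.
Proof.
move=> hg hh e0 hl; rewrite /Phi -(lin_sub (linu n) (Lip0_comp (inB_Lip0 hg)) (Lip0_comp (inB_Lip0 hh))).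
rewrite -[e]mul1r; apply: (lin_bound (linu n) (hu n).2) => //.
by rewrite fz hg.1 hh.1 subrr.
Qed.

Lemma ext (e : R) (S : nat -> nat) : 0 < e -> (forall i, (S i < S i.+1)%N) ->
  exists tau : nat -> nat, (forall i, (tau i < tau i.+1)%N) /\
    forall i j g, inB g -> nk (Phi (S (tau i)) g - Phi (S (tau j)) g) <= e.
Proof.
move=> e0 hS.
have e3 : 0 < e / 3 by rewrite divr_gt0.
have e6 : 0 < e / 6 by rewrite divr_gt0.
have [k [G [GB hG]]] := netB e3.
have [kV [V hV]] := vec_net b k Lf e6.
have hc : forall n, exists j, (j < kV)%N /\ forall i, (i < k)%N -> nk (Phi (S n) (G i) - V j i) <= e / 6.
  move=> n; apply: (hV (fun i => Phi (S n) (G i))) => i _; exact: Phi_bound.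
pose c n := proj1_sig (constructive_indefinite_description _ (hc n)).
have hcn : forall n, (c n < kV)%N /\ forall i, (i < k)%N -> nk (Phi (S n) (G i) - V (c n) i) <= e / 6.
  by move=> n; rewrite /c; case: constructive_indefinite_description.
have [tau [j0 [htau htc]]] := sub_pigeon (fun n => (hcn n).1).
exists tau; split => // i i' g hg.
have [jj [jjk hjj]] := hG g hg.
have d1 := Phi_diff (S (tau i)) hg (GB jj) e3 hjj.
have d2 := Phi_diff (S (tau i')) hg (GB jj) e3 hjj.
have v1 := (hcn (tau i)).2 jj jjk; rewrite htc in v1.
have v2 := (hcn (tau i')).2 jj jjk; rewrite htc in v2.
apply: le_trans (nk_tri _ (Phi (S (tau i)) (G jj)) _) _.
apply: le_trans (lerD (lexx _) (nk_tri _ (V j0 jj) _)) _.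
apply: le_trans (lerD (lexx _) (lerD (lexx _) (nk_tri _ (Phi (S (tau i')) (G jj)) _))) _.
rewrite nkB in v2; rewrite nkB in d2.
lra.
Qed.

Lemma sigma_ex : exists sigma : nat -> nat, (forall i, (sigma i < sigma i.+1)%N) /\
  forall e : R, 0 < e -> exists N0, forall n m g, (N0 <= n)%N -> (N0 <= m)%N -> inB g ->
    nk (Phi (sigma n) g - Phi (sigma m) g) <= e.
Proof.
have hk : forall k : nat, 0 < (k.+1%:R : R)^-1 by move=> k; rewrite invr_gt0 ltr0Sn.
have [sigma [hs hQ]] := @diag (fun k a a2 => forall g, inB g -> nk (Phi a g - Phi a2 g) <= (k.+1%:R)^-1)
  (fun k S hS => ext (hk k) hS).
exists sigma; split => // e e0.
pose k := Num.truncn e^-1.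
exists k.+1 => n m g hn hm hg; apply: le_trans (hQ k n m hn hm g hg) _.
rewrite -[e]invrK lef_pV2 ?posrE ?invr_gt0 //; first exact: ltW (truncnS_gt _).
Qed.

Lemma scale_inB g : @Lip0 R b N dN zN g -> exists c : R, 0 < c /\
  exists g', inB g' /\ forall n, Phi n g = embed b c * Phi n g'.
Proof.
move=> [g0 [L hL]].
pose c := Num.max L 1.
have c0 : 0 < c by rewrite /c lt_max ltr01 orbT.
have Lc : L <= c by rewrite /c le_max lexx.
pose g' := fun y => embed b c^-1 * g y.
have g'i : inB g'.
  split; first by rewrite /g' g0 mulr0.
  apply/lipP => x y; rewrite /g' -mulrBr nkM nk_embed ger0_norm; last by rewrite invr_ge0 ltW.
  rewrite mul1r ler_pdivrMl //; move/lipP: hL => hL.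
  apply: le_trans (hL x y) _; apply: ler_wpM2r => //; exact: dist_ge0.
exists c; split => //; exists g'; split => // n.
rewrite /Phi -(lin_scale (embed b c) (linu n) (Lip0_comp (inB_Lip0 g'i))).
congr (u n); apply: functional_extensionality => x; rewrite /g' mulrA -embedM.
by rewrite mulfV ?gt_eqF // embed1 mul1r.
Qed.

Lemma main_compact : exists (sigma : nat -> nat) (psi : functional R b N),
  (forall n, (sigma n < sigma n.+1)%N) /\ in_free dN zN psi /\
  forall e : R, 0 < e -> exists N0 : nat, forall n, (N0 <= n)%N ->
    dnorm_le dN zN (fsub (hat f (u (sigma n))) psi) e.
Proof.
have [sigma [hs hU]] := sigma_ex.
pose psi (g : N -> K) := limK (fun n => Phi (sigma n) g).
have hcv : forall g, @Lip0 R b N dN zN g -> conv (fun n => Phi (sigma n) g) (psi g).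
  move=> g hg; apply: limK_spec => e e0.
  have [c [c0 [g' [hg' hc]]]] := scale_inB hg.
  have [N0 hN0] := hU (e / c) (divr_gt0 e0 c0).
  exists N0 => n m hn hm; rewrite !hc -mulrBr nkM nk_embed ger0_norm; last exact: ltW.
  by rewrite -ler_pdivlMl // mulrC; apply: hN0.
have lpsi : @lin R b N dN zN psi.
  move=> a g h hg hh.
  apply: (conv_uniq (hcv _ (Lip0_comb a hg hh))).
  have -> : (fun n => Phi (sigma n) (fun x => a * g x + h x)) =
            (fun n => a * Phi (sigma n) g + Phi (sigma n) h).
    apply: functional_extensionality => n; rewrite /Phi.
    exact: (linu (sigma n) a (Lip0_comp hg) (Lip0_comp hh)).
  exact: conv_comb (hcv _ hg) (hcv _ hh).
have bpsi : dnorm_le dN zN psi Lf.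
  move=> g g0 g1; rewrite nk_le -[psi g]subr0.
  apply: (conv_le (hcv _ (inB_Lip0 (conj g0 g1)))); exists 0%N => n _.
  by rewrite subr0; apply: Phi_bound.
have cv : forall e : R, 0 < e -> exists N0, forall n g, (N0 <= n)%N -> inB g ->
    nk (psi g - Phi (sigma n) g) <= e.
  move=> e e0; have [N0 hN0] := hU e e0; exists N0 => n g hn hg.
  apply: (conv_le (hcv _ (inB_Lip0 hg))); exists N0 => m hm; exact: hN0.
exists sigma, psi; split => //; split.
  split; first by split => //; exists Lf.
  move=> e e0.
  have e2 : 0 < e / 2 by rewrite divr_gt0.
  have [N0 hN0] := cv _ e2.
  have [_ hap] := (hu (sigma N0)).1.
  have [nn [a [p hp]]] := hap (e / (2 * Lf)) (divr_gt0 e0 (mulr_gt0 (ltr0Sn R 1) Lf0)).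
  exists nn, a, (fun i => f (p i)) => g g0 g1.
  rewrite /fsub nk_le.
  apply: le_trans (nk_tri _ (Phi (sigma N0) g) _) _.
  have h1 := hN0 N0 g (leqnn _) (conj g0 g1).
  have h2 : nk (Phi (sigma N0) g - molecule a (fun i => f (p i)) g) <= e / 2.
    have -> : e / 2 = e / (2 * Lf) * (1 * Lf) by rewrite mul1r; field; rewrite gt_eqF.
    change (nk (fsub (u (sigma N0)) (molecule a p) (fun x => g (f x))) <= e / (2 * Lf) * (1 * Lf)).
    apply: (lin_bound (fsub_lin (linu (sigma N0)) (@molecule_lin R b M dM zM nn a p)) hp).
    - by rewrite fz.
    - exact: comp_lip.
    - by rewrite mul1r.
  lra.
move=> e e0; have [N0 hN0] := cv e e0; exists N0 => n hn g g0 g1.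
rewrite /fsub nk_le nkB; exact: hN0 n g hn (conj g0 g1).
Qed.
End Main.

Theorem corollary2p9 (R : realType) (b : bool)
  (M N : Type) (dM : metric R M) (dN : metric R N) (zM : M) (zN : N)
  (f : M -> N) :
  complete dM -> complete dN ->
  lipschitz dM dN f -> f zM = zN ->
  image_totally_bounded dN f ->
  uniformly_locally_flat dM dN f ->
  @compact_op R b M N dM zM dN zN (@hat R b M N f).
Proof.
move=> _ _ [L0 hL0] fz TB ULF u hu.
pose Lf := Num.max L0 1.
have Lf0 : 0 < Lf by rewrite /Lf lt_max ltr01 orbT.
have hLf : forall x y, dN (f x) (f y) <= Lf * dM x y.
  move=> x y; apply: le_trans (hL0 x y) _; apply: ler_wpM2r; first exact: dist_ge0.
  by rewrite /Lf le_max lexx.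
exact: (main_compact Lf0 hLf fz TB ULF hu).
Qed.
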